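(* Let $0\le p\le 1$ be given. Suppose that $G$ is an $n$-vertex $r$-graph with density $q\ge p$ (and $p\binom{n}{r}$ is an integer). Then $H_r(n,p)\ge (p/q)^n e^{-2/p}H(G)(1-o(1))$, where $o(1)\to 0$ as $n\to\infty$.
   Context: An $r$-graph has a vertex set and an edge set consisting of $r$-element subsets of the vertex set. An $n$-vertex $r$-graph has density $p$ if it has exactly $p\binom{n}{r}$ edges. A Hamiltonian cycle of an $n$-vertex $r$-graph $G$ is given by an ordering $v_1,\dots,v_n$ of its vertices such that for every $i$ the set $\{v_i,\dots,v_{i+r-1}\}$ (indices modulo $n$) is an edge; the cycle is identified with this set of $n$ edges. $H(G)$ is the number of Hamiltonian cycles of $G$. $H_r(n,p)$ is the maximum of $H(G)$ over all $n$-vertex $r$-graphs of density $p$. *)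

(* Defs.v *)
From HB Require Import structures.
From mathcomp Require Import all_boot all_order all_fingroup all_algebra.
From mathcomp Require Import all_classical all_reals all_analysis.
Set Implicit Arguments. Unset Strict Implicit. Unset Printing Implicit Defensive.
Import Order.TTheory GRing.Theory Num.Theory.

Definition is_rgraph (r n : nat) (E : {set {set 'I_n}}) : bool :=
  [forall e in E, #|e| == r].

(* An ordering v_0,...,v_{n-1} of the vertices is a permutation s
   (position i |-> vertex s i).  The window starting at position i is
   {v_i, ..., v_{i+r-1}} with indices mod n: vertex x belongs to it iff its
   position s^-1 x equals (i + k) mod n for some k < r. *)
Definition window (r n : nat) (s : {perm 'I_n}) (i : 'I_n) : {set 'I_n} :=
  [set x : 'I_n | [exists k : 'I_r, val ((s^-1)%g x) == (i + k) %% n]].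

(* The Hamiltonian cycle given by the ordering s, identified with its set of
   n windows. *)
Definition ham_cycle (r n : nat) (s : {perm 'I_n}) : {set {set 'I_n}} :=
  [set window r s i | i : 'I_n].

Definition ham_cycles (r n : nat) (E : {set {set 'I_n}}) :
  {set {set {set 'I_n}}} :=
  [set C | [exists s : {perm 'I_n}, (C == ham_cycle r s) && (C \subset E)]].

Definition H (r n : nat) (E : {set {set 'I_n}}) : nat := #|ham_cycles r E|.

(* H_r(n,p) where m = p * C(n,r) is the (integer) number of edges. *)
Definition Hmax (r n m : nat) : nat :=
  \max_(E : {set {set 'I_n}} | is_rgraph r E && (#|E| == m)) H r E.

(* Main.v *)
Require Import Defs.
From HB Require Import structures.
From mathcomp Require Import all_boot all_order all_fingroup all_algebra.
From mathcomp Require Import all_classical all_reals all_analysis.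
From mathcomp Require Import ring lra zify.
Import Order.TTheory GRing.Theory Num.Theory.

Lemma hc_sub (r n : nat) (E E' : {set {set 'I_n}}) : E' \subset E ->
  ham_cycles r E' = [set C in ham_cycles r E | C \subset E'].
Proof.
move=> sE; apply/setP => C; rewrite !inE.
apply/existsP/andP.
  case=> s /andP[/eqP -> sub]; split=> //; apply/existsP; exists s.
  by rewrite eqxx (fintype.subset_trans sub sE).
by case=> /existsP[s /andP[/eqP -> _]] sub; exists s; rewrite eqxx.
Qed.

Lemma hc_card (r n : nat) (E C : {set {set 'I_n}}) :
  C \in ham_cycles r E -> #|C| <= n.
Proof.
rewrite inE => /existsP[s /andP[/eqP -> _]].
rewrite /ham_cycle; apply: leq_trans (leq_imset_card _ _) _.
by rewrite cardT size_enum_ord.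
Qed.

Lemma count_sup (T : finType) (E C : {set T}) m : C \subset E -> #|C| <= m ->
  'C(#|E| - #|C|, m - #|C|) <=
  #|[set E' : {set T} | [&& E' \subset E, #|E'| == m & C \subset E']]|.
Proof.
move=> sCE cm.
have cD : #|E :\: C| = #|E| - #|C| by rewrite cardsD (finset.setIidPr sCE).
rewrite -cD -cards_draws.
rewrite -(card_in_imset (f := fun A => A :|: C)); last first.
  move=> A B; rewrite !inE => /andP[sA _] /andP[sB _] eqAB.
  apply/setP => x; have := congr1 (fun S : {set T} => x \in S) eqAB; rewrite /= !inE.
  case xC: (x \in C) => /=; last by rewrite !orbF.
  have: x \notin A by apply/negP => /(fintype.subsetP sA); rewrite inE xC.
  have: x \notin B by apply/negP => /(fintype.subsetP sB); rewrite inE xC.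
  by move=> /negbTE -> /negbTE ->.
apply: subset_leq_card; apply/fintype.subsetP => S /imsetP[A]; rewrite !inE.
move=> /andP[sA /eqP cA] ->; rewrite finset.subsetUr andbT.
rewrite finset.subUset sCE andbT (fintype.subset_trans sA) ?finset.subsetDl //=.
rewrite cardsU.
have -> : A :&: C = finset.set0 :> {set T}.
  apply/setP => x; rewrite !inE; apply/negP => /andP[xA xC].
  by have := fintype.subsetP sA x xA; rewrite inE xC.
by rewrite cards0 subn0 cA subnK.
Qed.

Lemma count_main (r n m : nat) (E : {set {set 'I_n}}) :
  is_rgraph r E -> n <= m -> m <= #|E| ->
  'C(#|E| - n, m - n) * H r E <= 'C(#|E|, m) * Hmax r n m.
Proof.
move=> rE nm mE.
set S := [set E' : {set {set 'I_n}} | E' \subset E & #|E'| == m].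
have cS : #|S| = 'C(#|E|, m) by rewrite cards_draws.
have step1 : \sum_(E' in S) H r E' <= 'C(#|E|, m) * Hmax r n m.
  rewrite -cS -sum_nat_const; apply: leq_sum => E'; rewrite inE => /andP[sE cE].
  apply: leq_bigmax_cond; rewrite cE andbT.
  apply/forallP => e; apply/implyP => eE'.
  by move/forallP: rE => /(_ e) /implyP; apply; apply: (fintype.subsetP sE).
apply: leq_trans step1.
have -> : \sum_(E' in S) H r E' =
   \sum_(E' in S) \sum_(C in ham_cycles r E) (C \subset E' : nat).
  apply: eq_bigr => E'; rewrite inE => /andP[sE _].
  rewrite /H (hc_sub _ _ _ _ sE) -sum1_card big_mkcond /=.
  rewrite [RHS]big_mkcond /=. by apply: eq_bigr => C _; rewrite inE; case: (C \in ham_cycles r E); case: (C \subset E').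
rewrite exchange_big /= /H mulnC -sum_nat_const.
apply: leq_sum => C HC.
have sCE : C \subset E.
  by move: HC; rewrite inE => /existsP[s /andP[/eqP -> ->]].
have cCn := hc_card _ _ _ _ HC.
have := count_sup _ _ _ _ sCE (leq_trans cCn nm).
have le1 : 'C(#|E| - n, m - n) <= 'C(#|E| - #|C|, m - #|C|).
  rewrite -(bin_sub (leq_sub2r n mE)) -(bin_sub (leq_sub2r #|C| mE)).
  have -> : #|E| - n - (m - n) = #|E| - m by rewrite subnBA // subnK // (leq_trans nm).
  have -> : #|E| - #|C| - (m - #|C|) = #|E| - m.
    by rewrite subnBA ?(leq_trans cCn nm) // subnK // (leq_trans (leq_trans cCn nm)).
  by apply: leq_bin2l; apply: leq_sub2l.
move=> le2; apply: leq_trans le1 (leq_trans le2 _).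
rewrite -sum1_card big_mkcond /= [X in _ <= X]big_mkcond /=.
apply: leq_sum => E' _; rewrite !inE.
by case: (E' \subset E); case: (#|E'| == m); case: (C \subset E').
Qed.

Lemma bin_id (M m n : nat) : n <= m -> m <= M ->
  'C(M - n, m - n) * M ^_ n = 'C(M, m) * m ^_ n.
Proof.
elim: n => [|n IH] nm mM; first by rewrite !subn0 !ffactn0.
have nm' : n <= m by apply: ltnW.
rewrite !ffactnSr [RHS]mulnA -IH //.
have h := mul_bin_diag (M - n) (m - n.+1).
rewrite -subn1 -subnDA addn1 in h.
have e : (m - n.+1).+1 = m - n by rewrite subnS prednK // subn_gt0.
rewrite e in h.
rewrite mulnCA [X in _ * X = _]mulnC h.
ring.
Qed.

Lemma ffact_le_exp (M n : nat) : M ^_ n <= M ^ n.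
Proof.
elim: n => [|n IH]; first by rewrite ffactn0 expn0.
by rewrite ffactnSr expnSr leq_mul // leq_subr.
Qed.

Lemma bin_mono (n k : nat) : k.*2.+1 <= n -> 'C(n, k) <= 'C(n, k.+1).
Proof.
move=> h.
have e := mul_bin_left n k.
rewrite -(leq_pmul2l (ltn0Sn k)) e leq_mul2r; apply/orP; right.
lia.
Qed.

Lemma bin2_le (n r : nat) : 2 <= r -> r.*2 <= n -> 'C(n, 2) <= 'C(n, r).
Proof.
move=> r2 rn.
have: forall j, 2 + j <= r -> 'C(n, 2) <= 'C(n, 2 + j).
  elim=> [|j IH] hj; first by rewrite addn0.
  apply: leq_trans (IH (ltnW hj)) _; rewrite addnS; apply: bin_mono.
  lia.
by move=> /(_ (r - 2)); rewrite subnKC // leqnn; apply.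
Qed.

Lemma bin2_double n : ('C(n, 2)).*2 = n * n.-1.
Proof. by rewrite -mul2n -mul_bin_diag bin1 mulnC. Qed.
Local Open Scope ring_scope.

Lemma key (R : realType) (M y : R) : 0 < M -> 0 <= y -> 2 * y <= M ->
  M * expR (- (2 * y / M)) <= M - y.
Proof.
move=> M0 y0 yM.
set t := 2 * y / M.
have tM : t * M = 2 * y by rewrite /t mulfVK // gt_eqF.
have t0 : 0 <= t by rewrite /t; apply: divr_ge0; lra.
have t1 : t <= 1 by rewrite /t ler_pdivrMr // mul1r.
have e1 := expR_ge1Dx t.
have ep := expR_gt0 t.
rewrite expRN -/(M / expR t) ler_pdivrMr //.
have h1 : M <= (M - y) * (1 + t) by nra.
apply: le_trans h1 _; apply: ler_wpM2l => //; lra.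
Qed.

Lemma ffact_lb (R : realType) (m n : nat) : (0 < m)%N -> (2 * n.-1 <= m)%N ->
  (m%:R : R) ^+ n * expR (- ((n * n.-1)%:R / m%:R)) <= (m ^_ n)%:R.
Proof.
move=> m0; elim: n => [|n IH] h.
  by rewrite ffactn0 expr0 mul0n mul0r oppr0 expR0 mulr1.
have hn : (2 * n <= m)%N by [].
have IH' := IH ltac:(lia).
have e : (n.+1 * n.+1.-1 = n * n.-1 + 2 * n)%N by case: n {IH IH' h hn} => //= n; lia.
rewrite e ffactnSr natrM natrD mulrDl opprD expRD exprSr.
rewrite natrB; last by lia.
have M0 : (0 : R) < m%:R by rewrite ltr0n.
have k := @key R _ n%:R M0 (ler0n _ _) ltac:(by rewrite -natrM ler_nat).
rewrite natrM mulrACA; apply: ler_pM => //.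
- by rewrite -natrM.
- by rewrite natrM.
Qed.

Theorem lemma1 (R : realType) (r : nat) (p : R) :
  (2 <= r)%N -> 0 < p -> p <= 1 ->
  forall eps : R, 0 < eps ->
  exists N : nat, forall n : nat, (N <= n)%N ->
  forall m : nat, m%:R = p * ('C(n, r))%:R ->
  forall E : {set {set 'I_n}}, is_rgraph r E ->
  let q : R := (#|E|)%:R / ('C(n, r))%:R in
  p <= q ->
  (p / q) ^+ n * expR (- (2 / p)) * (H r E)%:R * (1 - eps) <= (Hmax r n m)%:R.
Proof.
move=> r2 p0 p1 eps eps0.
exists (r.*2 + Num.Def.archi_bound (4 / p))%N => n nN m hm E rE q pq.
have nr : (r.*2 <= n)%N by lia.
have n4 : 4 / p < n%:R.
  have h := @archi_boundP R (4 / p) ltac:(by apply: divr_ge0; lra).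
  apply: lt_le_trans h _; rewrite ler_nat; lia.
have pn : 4 < p * n%:R by rewrite mulrC -ltr_pdivrMr.
set Cn := 'C(n, r) in hm.
have C0 : (0 < Cn)%N by rewrite bin_gt0; lia.
have C0R : (0 : R) < Cn%:R by rewrite ltr0n.
set M := #|E|.
have q0 : 0 < q by apply: lt_le_trans p0 pq.
have HE0 : (0 : R) <= (H r E)%:R by [].
have pq0 : 0 <= (p / q) ^+ n by rewrite exprn_ge0 // divr_ge0 // ltW.
have ex0 : 0 < expR (- (2 / p)) := expR_gt0 _.
case: (lerP 1 eps) => he.
  apply: le_trans (ler0n _ _).
  apply: mulr_ge0_le0; last by lra.
  by rewrite mulr_ge0 // mulr_ge0 // ltW.
have hb2 := bin2_le _ _ r2 nr.
have c2e : 2 * ('C(n, 2))%:R = n%:R * (n.-1)%:R :> R.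
  by rewrite -[RHS]natrM -bin2_double -mul2n natrM.
have n1 : n%:R = (n.-1)%:R + 1 :> R by rewrite natr1 prednK //; lia.
have mc2 : p * ('C(n, 2))%:R <= m%:R.
  rewrite hm; apply: ler_wpM2l; [exact: ltW | by rewrite ler_nat].
have hm2 : (2 * n.-1 <= m)%N.
  rewrite -(ler_nat R) natrM.
  have h2 : 2 * (p * ('C(n, 2))%:R) = (p * n%:R) * (n.-1)%:R by rewrite mulrCA c2e mulrA.
  have h3 : 4 * (n.-1)%:R <= (p * n%:R) * (n.-1)%:R :> R.
    by apply: ler_wpM2r => //; apply: ltW.
  lra.
have qC : q * Cn%:R = M%:R by rewrite /q mulfVK // gt_eqF.
have mM : (m <= M)%N.
  by rewrite -(ler_nat R) -qC hm ler_wpM2r // ltW.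
have nm : (n <= m)%N by clear -hm2 nr r2; lia.
have m0 : (0 < m)%N by clear -nm nr r2; lia.
have nM : (n <= M)%N by apply: leq_trans mM.
have cnt := count_main _ _ _ _ rE nm mM.
have bid := bin_id _ _ _ nm mM.
have Ca0 : (0 < 'C(M, m))%N by rewrite bin_gt0.
have Mf0 : (0 < M ^_ n)%N by rewrite ffact_gt0.
have key1 : (H r E * m ^_ n <= Hmax r n m * M ^_ n)%N.
  rewrite -(leq_pmul2l Ca0).
  have -> : ('C(M, m) * (H r E * m ^_ n) = 'C(M - n, m - n) * H r E * M ^_ n)%N.
    by rewrite mulnCA -bid; ring.
  by rewrite mulnA leq_mul2r cnt orbT.
have pqe : p / q = m%:R / M%:R.
  have -> : p = m%:R / Cn%:R by rewrite hm mulfK // gt_eqF.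
  rewrite /q; field; rewrite ?gt_eqF //.
  by rewrite ltr0n; clear -nM nr r2; lia.
have M0R : (0 : R) < M%:R by rewrite ltr0n; clear -nM nr r2; lia.
have m0R : (0 : R) < m%:R by rewrite ltr0n.
have aexp : expR (- (2 / p)) <= expR (- ((n * n.-1)%:R / m%:R)).
  rewrite ler_expR lerN2 ler_pdivrMr // hm natrM -c2e.
  have -> : 2 / p * (p * Cn%:R) = 2 * Cn%:R by field; rewrite gt_eqF.
  by rewrite ler_wpM2l // ler_nat.
have fl := @ffact_lb R m n m0 hm2.
have A : (p / q) ^+ n * expR (- (2 / p)) <= (m ^_ n)%:R / (M ^_ n)%:R.
  rewrite pqe expr_div_n mulrAC ler_pdivrMr ?exprn_gt0 //.
  apply: le_trans (ler_wpM2l _ aexp) _; first by rewrite exprn_ge0 // ltW.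
  apply: le_trans fl _.
  rewrite mulrAC ler_pdivlMr ?ltr0n // ler_wpM2l // ?ler_nat //.
  by rewrite -natrX ler_nat ffact_le_exp.
apply: le_trans (_ : (m ^_ n)%:R / (M ^_ n)%:R * (H r E)%:R <= _).
  apply: le_trans (_ : (p / q) ^+ n * expR (- (2 / p)) * (H r E)%:R <= _).
    rewrite -[X in _ <= X]mulr1; apply: ler_wpM2l; last by lra.
    by rewrite mulr_ge0 // mulr_ge0 // ltW.
  by apply: ler_wpM2r.
rewrite mulrAC ler_pdivrMr ?ltr0n // -!natrM ler_nat mulnC.
exact: key1.
Qed.
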